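(* Let $f:\mathbb{R}_{\ge0}\to\mathbb{R}_{\ge0}$ be strictly increasing, let $\alpha\in[0,1)$, and let $$X(f,\alpha)=\{f(n)e^{2\pi i n\alpha}\ :\ n\in\mathbb{N}\}\subset\mathbb{C}.$$ If $X(f,\alpha)$ is $r$-relatively dense, then $\limsup_{n\to\infty} f(n)/\sqrt{n}<2r$. If $X(f,\alpha)$ is $s$-uniformly discrete, then $\liminf_{n\to\infty} f(n)/\sqrt{n}>s/2$.
   Context: $\mathbb{C}$ is identified with $\mathbb{R}^2$, and $B(x,r)$ denotes the open disk of radius $r$ centered at $x$. A set $X\subset\mathbb{C}$ is $r$-relatively dense ($r>0$) if $B(x,r)\cap X\ne\emptyset$ for every $x\in\mathbb{C}$. It is $s$-uniformly discrete ($s>0$) if $\mathrm{Card}(B(x,s)\cap X)\le1$ for every $x\in\mathbb{C}$. *)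

(* Defs.v *)
From Stdlib Require Import Reals.
From Coquelicot Require Import Coquelicot.
Open Scope R_scope.

Definition dist2 (p q : R * R) : R :=
  sqrt ((fst p - fst q) ^ 2 + (snd p - snd q) ^ 2).

Definition in_ball (x : R * R) (r : R) (p : R * R) : Prop := dist2 x p < r.

Definition Xset (f : R -> R) (alpha : R) (p : R * R) : Prop :=
  exists n : nat,
    p = (f (INR n) * cos (2 * PI * INR n * alpha),
         f (INR n) * sin (2 * PI * INR n * alpha)).

Definition rel_dense (r : R) (X : R * R -> Prop) : Prop :=
  0 < r /\ forall x : R * R, exists p, in_ball x r p /\ X p.

(* X is s-uniformly discrete: Card (B(x,s) ∩ X) <= 1 for every x *)
Definition unif_discrete (s : R) (X : R * R -> Prop) : Prop :=
  0 < s /\ forall x : R * R, forall p q,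
    in_ball x s p -> X p -> in_ball x s q -> X q -> p = q.

(* Main.v *)
Require Import Defs.
From Stdlib Require Import Reals.
From Coquelicot Require Import Coquelicot.
Open Scope R_scope.
From Stdlib Require Import Reals ZArith Lra Lia Psatz FinFun ClassicalEpsilon.
From Coquelicot Require Import Coquelicot.
Open Scope R_scope.

Lemma pigeon (g : nat -> nat) (K M : nat) :
  (forall i, (i < K)%nat -> (g i < M)%nat) ->
  (forall i j, (i < K)%nat -> (j < K)%nat -> g i = g j -> i = j) ->
  (K <= M)%nat.
Proof.
  intros Hb Hi. destruct (Nat.le_gt_cases K M) as [|HMK]; [assumption|].
  exfalso.
  assert (HF : bFun K g) by (intros x Hx; specialize (Hb x Hx); lia).
  destruct (proj1 (bInjective_bSurjective HF) Hi M HMK) as [x [Hx Hgx]].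
  specialize (Hb x Hx); lia.
Qed.

Lemma fchoice (P : nat -> nat -> Prop) :
  (forall i, exists n, P i n) -> exists g, forall i, P i (g i).
Proof.
  intros H. exists (fun i => proj1_sig (constructive_indefinite_description _ (H i))).
  intros i. exact (proj2_sig (constructive_indefinite_description _ (H i))).
Qed.

Definition nfl (z : R) : nat := Z.to_nat (Int_part z).

Lemma nfl_spec z : 0 <= z -> INR (nfl z) <= z < INR (nfl z) + 1.
Proof.
  intros Hz. destruct (base_Int_part z) as [H1 H2].
  assert (Hge : (0 <= Int_part z)%Z).
  { assert (IZR (-1) < IZR (Int_part z)) by lra. apply lt_IZR in H. lia. }
  unfold nfl. rewrite INR_IZR_INZ, Z2Nat.id by exact Hge. lra.
Qed.

Lemma nfl_mono z w : 0 <= z -> z <= w -> (nfl z <= nfl w)%nat.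
Proof.
  intros Hz Hzw. destruct (nfl_spec z Hz). destruct (nfl_spec w ltac:(lra)).
  assert (INR (nfl z) < INR (S (nfl w))) by (rewrite S_INR; lra).
  apply INR_lt in H3. lia.
Qed.

Lemma sqrt_lt_of a s : 0 < s -> a < s * s -> sqrt a < s.
Proof.
  intros Hs Ha. destruct (Rle_or_lt 0 a) as [Ha0|Ha0].
  - pose proof (sqrt_sqrt a Ha0). pose proof (sqrt_pos a). nra.
  - rewrite sqrt_neg_0 by lra. lra.
Qed.

Lemma abs_le_dist u v : Rabs u <= sqrt (u ^ 2 + v ^ 2).
Proof.
  rewrite <- sqrt_Rsqr_abs. apply sqrt_le_1_alt. unfold Rsqr. nra.
Qed.

Lemma nat_sq_bracket n : exists K, (1 <= K)%nat /\ ((K-1)*(K-1) <= n)%nat /\ (n < K*K)%nat.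
Proof.
  induction n as [|n [K [H1 [H2 H3]]]].
  - exists 1%nat. lia.
  - destruct (Nat.eq_dec (S n) (K*K)) as [E|E].
    + exists (S K). nia.
    + exists K. lia.
Qed.
Definition pt (f : R -> R) (alpha : R) (n : nat) : R * R :=
  (f (INR n) * cos (2 * PI * INR n * alpha), f (INR n) * sin (2 * PI * INR n * alpha)).

Lemma pt_norm f alpha n : (fst (pt f alpha n))^2 + (snd (pt f alpha n))^2 = (f (INR n))^2.
Proof.
  simpl. pose proof (sin2_cos2 (2 * PI * INR n * alpha)). unfold Rsqr in H. nra.
Qed.

Lemma fmono (f : R -> R) (Hf_incr : forall x y, 0 <= x -> x < y -> f x < f y) m n :
  (m <= n)%nat -> f (INR m) <= f (INR n).
Proof.
  intros H. destruct (Nat.eq_dec m n) as [->|E]; [lra|].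
  left. apply Hf_incr. apply pos_INR. apply lt_INR. lia.
Qed.

Lemma inr_close a b : Rabs (INR a - INR b) < 1 -> a = b.
Proof.
  intros H. destruct (Nat.lt_total a b) as [L|[E|L]]; auto; exfalso;
  apply le_INR in L; rewrite S_INR in L; apply Rabs_def2 in H; lra.
Qed.

Lemma dense_bound (f : R -> R) (alpha r : R)
  (Hf_nonneg : forall x, 0 <= x -> 0 <= f x)
  (Hf_incr : forall x y, 0 <= x -> x < y -> f x < f y) :
  rel_dense r (Xset f alpha) ->
  forall K, (1 <= K)%nat -> f (INR (K*K-1)) < 1.42 * r * INR K.
Proof.
  intros [Hr Hd] K HK.
  set (c := INR K - 1).
  assert (HKr : 1 <= INR K) by (apply (le_INR 1); exact HK).
  set (grid := fun i : nat => (r * (2 * INR (i / K) - c), r * (2 * INR (i mod K) - c))).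
  assert (Hex : forall i, exists n, in_ball (grid i) r (pt f alpha n)).
  { intros i. destruct (Hd (grid i)) as [p [Hp [n ->]]]. exists n. exact Hp. }
  destruct (fchoice _ Hex) as [g Hg].
  assert (Hcoord : forall i, Rabs (fst (grid i) - fst (pt f alpha (g i))) < r /\
                             Rabs (snd (grid i) - snd (pt f alpha (g i))) < r).
  { intros i. specialize (Hg i). unfold in_ball, dist2 in Hg. split.
    - eapply Rle_lt_trans; [apply abs_le_dist|exact Hg].
    - eapply Rle_lt_trans; [|exact Hg]. rewrite Rplus_comm. apply abs_le_dist. }
  assert (Hbnd : forall i, (i < K*K)%nat -> f (INR (g i)) < 1.42 * r * INR K).
  { intros i Hi.
    assert (Ha : (i / K <= K - 1)%nat).
    { assert (i / K < K)%nat by (apply Nat.Div0.div_lt_upper_bound; lia). lia. }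
    assert (Hb : (i mod K <= K - 1)%nat).
    { assert (i mod K < K)%nat by (apply Nat.mod_upper_bound; lia). lia. }
    apply le_INR in Ha, Hb. rewrite minus_INR in Ha, Hb by lia. simpl INR in Ha, Hb.
    pose proof (pos_INR (i / K)). pose proof (pos_INR (i mod K)).
    destruct (Hcoord i) as [H1 H2]. apply Rabs_def2 in H1, H2.
    pose proof (pt_norm f alpha (g i)).
    pose proof (Hf_nonneg (INR (g i)) (pos_INR _)).
    set (px := fst (pt f alpha (g i))) in *. set (py := snd (pt f alpha (g i))) in *.
    change (fst (grid i)) with (r * (2 * INR (i / K) - c)) in H1.
    change (snd (grid i)) with (r * (2 * INR (i mod K) - c)) in H2.
    unfold c in *.
    assert (Hpx : px * px < r * INR K * (r * INR K)).
    { assert (Rabs px < r * INR K).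
      { apply Rabs_def1; nra. }
      pose proof (Rabs_pos px).
      assert (px * px = Rabs px * Rabs px) by (rewrite <- Rabs_mult; symmetry; apply Rabs_pos_eq; apply Rle_0_sqr).
      nra. }
    assert (Hpy : py * py < r * INR K * (r * INR K)).
    { assert (Rabs py < r * INR K).
      { apply Rabs_def1; nra. }
      pose proof (Rabs_pos py).
      assert (py * py = Rabs py * Rabs py) by (rewrite <- Rabs_mult; symmetry; apply Rabs_pos_eq; apply Rle_0_sqr).
      nra. }
    assert (Hy : 0 < r * INR K) by nra.
    destruct (Rlt_or_le (f (INR (g i))) (1.42 * r * INR K)) as [|Hc]; [assumption|].
    exfalso. assert (1.42 * r * INR K * (1.42 * r * INR K) <= f (INR (g i)) * f (INR (g i))).
    { apply Rmult_le_compat; nra. }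
    nra. }
  assert (Hinj : forall i j, (i < K*K)%nat -> (j < K*K)%nat -> g i = g j -> i = j).
  { intros i j Hi Hj E.
    destruct (Hcoord i) as [H1 H2]. destruct (Hcoord j) as [H3 H4].
    rewrite <- E in H3, H4. simpl fst in H1, H3. simpl snd in H2, H4.
    apply Rabs_def2 in H1, H2, H3, H4.
    assert (Ea : (i / K)%nat = (j / K)%nat).
    { apply inr_close. apply Rabs_def1; nra. }
    assert (Eb : (i mod K)%nat = (j mod K)%nat).
    { apply inr_close. apply Rabs_def1; nra. }
    rewrite (Nat.div_mod_eq i K), (Nat.div_mod_eq j K), Ea, Eb. reflexivity. }
  destruct (Rlt_or_le (f (INR (K*K-1))) (1.42 * r * INR K)) as [|Hc]; [assumption|].
  exfalso.
  assert (K * K <= K * K - 1)%nat.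
  { apply (pigeon g); [|exact Hinj].
    intros i Hi. destruct (Nat.lt_ge_cases (g i) (K*K-1)) as [|Hge]; [assumption|].
    exfalso. pose proof (fmono f Hf_incr _ _ Hge). pose proof (Hbnd i Hi). lra. }
  nia.
Qed.

Lemma limsup_part (f : R -> R) (alpha r : R)
  (Hf_nonneg : forall x, 0 <= x -> 0 <= f x)
  (Hf_incr : forall x y, 0 <= x -> x < y -> f x < f y) :
  rel_dense r (Xset f alpha) ->
  Rbar_lt (LimSup_seq (fun n => f (INR n) / sqrt (INR n))) (Finite (2 * r)).
Proof.
  intros Hd. pose proof (proj1 Hd) as Hr.
  assert (Hev : eventually (fun n => f (INR n) / sqrt (INR n) <= 1.9 * r)).
  { exists 100%nat. intros n Hn.
    destruct (nat_sq_bracket n) as [K [H1 [H2 H3]]].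
    pose proof (dense_bound f alpha r Hf_nonneg Hf_incr Hd K H1) as HB.
    pose proof (fmono f Hf_incr n (K*K-1) ltac:(lia)) as HM.
    apply le_INR in H2. rewrite mult_INR, minus_INR in H2 by lia. simpl INR in H2.
    apply le_INR in Hn. simpl INR in Hn. 
    pose proof (sqrt_sqrt (INR n) (pos_INR n)). pose proof (sqrt_pos (INR n)).
    set (q := sqrt (INR n)) in *.
    assert (Hq : 10 <= q) by nra.
    assert (HKq : INR K - 1 <= q) by nra.
    apply Rmult_le_reg_r with q; [lra|]. unfold Rdiv. rewrite Rmult_assoc, Rinv_l by lra.
    nra. }
  apply LimSup_le in Hev. rewrite LimSup_seq_const in Hev.
  destruct (LimSup_seq _); simpl in *; lra.
Qed.

Lemma discrete_bound (f : R -> R) (alpha s : R)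
  (Hf_nonneg : forall x, 0 <= x -> 0 <= f x)
  (Hf_incr : forall x y, 0 <= x -> x < y -> f x < f y) :
  unif_discrete s (Xset f alpha) ->
  forall n, INR (S n) <= (2 * f (INR n) / ((7/5) * s) + 1) ^ 2.
Proof.
  intros [Hs Hu] n.
  set (R0 := f (INR n)). set (t := (7/5) * s).
  assert (Ht : 0 < t) by (unfold t; lra).
  assert (HR0 : 0 <= R0) by (apply Hf_nonneg, pos_INR).
  set (M := S (nfl (2 * R0 / t))).
  set (a := fun i => nfl ((fst (pt f alpha i) + R0) / t)).
  set (b := fun i => nfl ((snd (pt f alpha i) + R0) / t)).
  assert (Hco : forall i, (i <= n)%nat ->
     Rabs (fst (pt f alpha i)) <= R0 /\ Rabs (snd (pt f alpha i)) <= R0).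
  { intros i Hi. pose proof (pt_norm f alpha i).
    pose proof (fmono f Hf_incr i n Hi). pose proof (Hf_nonneg (INR i) (pos_INR i)).
    fold R0 in H0.
    split; rewrite <- (Rabs_pos_eq R0 HR0); apply Rsqr_le_abs_0; unfold Rsqr;
      apply Rle_trans with (R0 * R0); nra. }
  assert (Hz : forall u, Rabs u <= R0 -> 0 <= (u + R0) / t /\ (u + R0) / t <= 2 * R0 / t).
  { intros u Hu'. apply Rabs_le_between in Hu'; destruct Hu' as [Hu1 Hu2]. split.
    - apply Rdiv_le_0_compat; lra.
    - unfold Rdiv. apply Rmult_le_compat_r; [left; apply Rinv_0_lt_compat; lra|lra]. }
  assert (Hlt : forall u, Rabs u <= R0 -> (nfl ((u + R0) / t) < M)%nat).
  { intros u Hu'. destruct (Hz u Hu'). unfold M. apply Nat.lt_succ_r. apply nfl_mono; lra. }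
  assert (Hcl : forall u v, Rabs u <= R0 -> Rabs v <= R0 ->
      nfl ((u + R0) / t) = nfl ((v + R0) / t) -> Rabs (u - v) < t).
  { intros u v Hu' Hv' E. destruct (Hz u Hu'), (Hz v Hv').
    pose proof (nfl_spec _ H). pose proof (nfl_spec _ H1). rewrite E in H3.
    assert (Rabs ((u + R0) / t - (v + R0) / t) < 1) by (apply Rabs_def1; lra).
    replace (u - v) with (((u + R0) / t - (v + R0) / t) * t) by (field; lra).
    rewrite Rabs_mult, (Rabs_pos_eq t) by lra. nra. }
  assert (HN : (S n <= M * M)%nat).
  { apply (pigeon (fun i => (a i * M + b i)%nat)).
    - intros i Hi. destruct (Hco i ltac:(lia)).
      pose proof (Hlt _ H). pose proof (Hlt _ H0). unfold a, b. nia.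
    - intros i j Hi Hj E.
      destruct (Hco i ltac:(lia)) as [Hi1 Hi2]. destruct (Hco j ltac:(lia)) as [Hj1 Hj2].
      pose proof (Hlt _ Hi1). pose proof (Hlt _ Hi2).
      pose proof (Hlt _ Hj1). pose proof (Hlt _ Hj2).
      fold (a i) (a j) (b i) (b j) in *.
      assert (Ea : a i = a j /\ b i = b j).
      { destruct (Nat.lt_total (a i) (a j)) as [L|[L|L]]; [nia| |nia]. split; [exact L|nia]. }
      destruct Ea as [Ea Eb].
      pose proof (Hcl _ _ Hi1 Hj1 Ea) as Dx. pose proof (Hcl _ _ Hi2 Hj2 Eb) as Dy.
      set (xi := fst (pt f alpha i)) in *. set (yi := snd (pt f alpha i)) in *.
      set (xj := fst (pt f alpha j)) in *. set (yj := snd (pt f alpha j)) in *.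
      set (m := ((xi + xj) / 2, (yi + yj) / 2)).
      assert (Dx2 : (xi - xj) * (xi - xj) < t * t).
      { pose proof (Rabs_pos (xi - xj)).
        assert ((xi-xj)*(xi-xj) = Rabs (xi-xj) * Rabs (xi-xj)) by (rewrite <- Rabs_mult; symmetry; apply Rabs_pos_eq; apply Rle_0_sqr).
        nra. }
      assert (Dy2 : (yi - yj) * (yi - yj) < t * t).
      { pose proof (Rabs_pos (yi - yj)).
        assert ((yi-yj)*(yi-yj) = Rabs (yi-yj) * Rabs (yi-yj)) by (rewrite <- Rabs_mult; symmetry; apply Rabs_pos_eq; apply Rle_0_sqr).
        nra. }
      assert (Hb1 : in_ball m s (pt f alpha i)).
      { unfold in_ball, dist2. apply sqrt_lt_of; [lra|]. change (((xi + xj) / 2 - xi) ^ 2 + ((yi + yj) / 2 - yi) ^ 2 < s * s).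
        unfold t in *. nra. }
      assert (Hb2 : in_ball m s (pt f alpha j)).
      { unfold in_ball, dist2. apply sqrt_lt_of; [lra|]. change (((xi + xj) / 2 - xj) ^ 2 + ((yi + yj) / 2 - yj) ^ 2 < s * s).
        unfold t in *. nra. }
      assert (Ep := Hu m _ _ Hb1 (ex_intro _ i eq_refl) Hb2 (ex_intro _ j eq_refl)).
      pose proof (pt_norm f alpha i) as Ni. pose proof (pt_norm f alpha j) as Nj.
      rewrite Ep in Ni. rewrite Ni in Nj.
      pose proof (Hf_nonneg (INR i) (pos_INR i)). pose proof (Hf_nonneg (INR j) (pos_INR j)).
      assert (Ef : f (INR i) = f (INR j)) by nra.
      destruct (Nat.lt_total i j) as [L|[L|L]]; auto; exfalso.
      + pose proof (Hf_incr (INR i) (INR j) (pos_INR i) (lt_INR _ _ L)). lra.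
      + pose proof (Hf_incr (INR j) (INR i) (pos_INR j) (lt_INR _ _ L)). lra. }
  apply le_INR in HN. rewrite mult_INR in HN.
  assert (HM : INR M <= 2 * R0 / t + 1).
  { unfold M. rewrite S_INR. assert (0 <= 2 * R0 / t) by (apply Rdiv_le_0_compat; lra).
    pose proof (nfl_spec _ H). lra. }
  pose proof (pos_INR M). apply Rle_trans with (INR M * INR M); [exact HN|].
  fold t. fold R0. replace ((2 * R0 / t + 1) ^ 2) with ((2 * R0 / t + 1) * (2 * R0 / t + 1)) by ring.
  apply Rmult_le_compat; lra.
Qed.

Lemma liminf_part (f : R -> R) (alpha s : R)
  (Hf_nonneg : forall x, 0 <= x -> 0 <= f x)
  (Hf_incr : forall x y, 0 <= x -> x < y -> f x < f y) :
  unif_discrete s (Xset f alpha) ->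
  Rbar_lt (Finite (s / 2)) (LimInf_seq (fun n => f (INR n) / sqrt (INR n))).
Proof.
  intros Hd. pose proof (proj1 Hd) as Hs.
  assert (Hev : eventually (fun n => 0.6 * s <= f (INR n) / sqrt (INR n))).
  { exists 100%nat. intros n Hn.
    pose proof (discrete_bound f alpha s Hf_nonneg Hf_incr Hd n) as HB.
    rewrite S_INR in HB.
    apply le_INR in Hn. simpl INR in Hn.
    pose proof (sqrt_sqrt (INR n) (pos_INR n)). pose proof (sqrt_pos (INR n)).
    set (q := sqrt (INR n)) in *.
    assert (Hq : 10 <= q) by nra.
    pose proof (Hf_nonneg (INR n) (pos_INR n)).
    set (F := f (INR n)) in *.
    assert (Hw : 0 <= 2 * F / ((7/5) * s)) by (apply Rdiv_le_0_compat; lra).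
    assert (Hq2 : q <= 2 * F / ((7/5) * s) + 1).
    { destruct (Rle_or_lt q (2 * F / ((7/5) * s) + 1)); [assumption|]. nra. }
    assert (HF : (7/10) * s * (q - 1) <= F).
    { replace (2 * F / ((7/5) * s)) with (F / ((7/10) * s)) in Hq2 by (field; lra).
      assert (EF : F = (7/10) * s * (F / ((7/10) * s))) by (field; lra).
      rewrite EF. nra. }
    apply Rmult_le_reg_r with q; [lra|]. unfold Rdiv. rewrite (Rmult_assoc F), Rinv_l by lra.
    nra. }
  apply LimInf_le in Hev. rewrite LimInf_seq_const in Hev.
  destruct (LimInf_seq _); simpl in *; lra.
Qed.

Theorem lemma1 (f : R -> R) (alpha : R)
  (Hf_nonneg : forall x, 0 <= x -> 0 <= f x)
  (Hf_incr : forall x y, 0 <= x -> x < y -> f x < f y)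
  (Halpha : 0 <= alpha < 1) :
  (forall r : R, rel_dense r (Xset f alpha) ->
     Rbar_lt (LimSup_seq (fun n => f (INR n) / sqrt (INR n))) (Finite (2 * r))) /\
  (forall s : R, unif_discrete s (Xset f alpha) ->
     Rbar_lt (Finite (s / 2)) (LimInf_seq (fun n => f (INR n) / sqrt (INR n)))).
Proof.
  split; intros.
  - eapply limsup_part; eauto.
  - eapply liminf_part; eauto.
Qed.
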